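(* Let $d\ge1$, $\lambda,R,B>0$, let $(x_s,y_s)_{s\ge1}$ satisfy $\|x_s\|\le R$, $y_s\in\{-1,1\}$, let $t\ge1$, and let $\Omega_t$ and its minimizer $\omega_t\in\mathbb R^{p_t}$ be as defined in the context. Let $\epsilon,\gamma>0$, $T\in\mathbb N$, and define $\omega_t^0=0$ and $\omega_t^i=\omega_t^{i-1}-\gamma\nabla\Omega_t(\omega_t^{i-1})$ for $i=1,\dots,T$. If \[\gamma=\frac{\lambda}{4\lambda+R^2},\qquad T\ge\left(4+\frac{R^2}{\lambda}\right)\log\frac{Rt}{\epsilon\sqrt\lambda},\] then $\|\omega_t^T-\omega_t\|\le\epsilon$.
   Context: Logistic loss $\ell(z,y)=\log(1+e^{-yz})$, $\ell_s(\theta)=\ell(\theta^\top x_s,y_s)$. Let $\hat\theta_s$ be the AIOLI forecasts: for $s<t$, $g_s=\nabla\ell_s(\hat\theta_s)$, $\eta_s=e^{y_s\hat\theta_s^\top x_s}/(1+BR)$, $\hat\ell_s(\theta)=\ell_s(\hat\theta_s)+g_s^\top(\theta-\hat\theta_s)+\frac{\eta_s}{2}(\theta-\hat\theta_s)^\top g_sg_s^\top(\theta-\hat\theta_s)$, and $\hat\theta_t=\arg\min_\theta\{\sum_{s<t}\hat\ell_s(\theta)+\ell(\theta^\top x_t,1)+\ell(\theta^\top x_t,-1)+\lambda\|\theta\|^2\}$. Let $A_{t-1}=\lambda I+\frac12\sum_{s=1}^{t-1}\eta_sg_sg_s^\top$, $b_{t-1}=\frac12\sum_{s=1}^{t-1}(\eta_sg_s^\top\hat\theta_s-1)g_s$,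 $L_{t-1}$ the lower-triangular Cholesky factor of $A_{t-1}$, $W_t=L_{t-1}^{-1}(b_{t-1},x_t)\in\mathbb R^{d\times2}$ of rank $p_t\in\{1,2\}$, $W_t^\top W_t=U_t\Sigma_tU_t^\top$ its economic eigendecomposition ($U_t\in\mathbb R^{2\times p_t}$ with orthonormal columns, $\Sigma_t$ positive diagonal), $u_t=\Sigma_t^{1/2}U_t^\top e_1$, $v_t=\Sigma_t^{1/2}U_t^\top e_2$ with $e_1=(1,0),e_2=(0,1)$, and \[\Omega_t(\omega)=\|\omega\|^2-2u_t^\top\omega+\log(1+e^{-v_t^\top\omega})+\log(1+e^{v_t^\top\omega}),\quad\omega\in\mathbb R^{p_t},\] with unique minimizer $\omega_t$. *)

(* Defs.v *)
From HB Require Import structures.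
From mathcomp Require Import all_boot all_order all_algebra.
From mathcomp Require Import all_classical all_reals.
From mathcomp Require Import all_analysis.
Set Implicit Arguments. Unset Strict Implicit. Unset Printing Implicit Defensive.
Import Order.TTheory GRing.Theory Num.Theory.
Import numFieldNormedType.Exports.
Local Open Scope ring_scope.

Section AIOLI.
Variable R : realType.

Definition dotc n (u v : 'cV[R]_n) : R := \sum_i u i 0 * v i 0.
Definition enorm n (v : 'cV[R]_n) : R := Num.sqrt (dotc v v).

Definition grad n (f : 'cV[R]_n -> R) (x : 'cV[R]_n) : 'cV[R]_n :=
  \col_i ('D_(delta_mx i 0) f x : R).

Definition logloss (z y : R) : R := ln (1 + expR (- (y * z))).


Definition loss_s (d : nat) (lam Rb B : R) (x : nat -> 'cV[R]_d) (y : nat -> R) (thhat : nat -> 'cV[R]_d) (s : nat) (th : 'cV[R]_d) : R := logloss (dotc th (x s)) (y s).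


Definition g_s (d : nat) (lam Rb B : R) (x : nat -> 'cV[R]_d) (y : nat -> R) (thhat : nat -> 'cV[R]_d) (s : nat) : 'cV[R]_d := grad ((loss_s lam Rb B x y thhat) s) (thhat s).
Definition eta_s (d : nat) (lam Rb B : R) (x : nat -> 'cV[R]_d) (y : nat -> R) (thhat : nat -> 'cV[R]_d) (s : nat) : R :=
  expR (y s * dotc (thhat s) (x s)) / (1 + B * Rb).

Definition lhat (d : nat) (lam Rb B : R) (x : nat -> 'cV[R]_d) (y : nat -> R) (thhat : nat -> 'cV[R]_d) (s : nat) (th : 'cV[R]_d) : R :=
  (loss_s lam Rb B x y thhat) s (thhat s) + dotc ((g_s lam Rb B x y thhat) s) (th - thhat s)
  + (eta_s lam Rb B x y thhat) s / 2 * (dotc ((g_s lam Rb B x y thhat) s) (th - thhat s)) ^+ 2.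

Definition aioli_obj (d : nat) (lam Rb B : R) (x : nat -> 'cV[R]_d) (y : nat -> R) (thhat : nat -> 'cV[R]_d) (t : nat) (th : 'cV[R]_d) : R :=
  \sum_(1 <= s < t) (lhat lam Rb B x y thhat) s th
  + logloss (dotc th (x t)) 1 + logloss (dotc th (x t)) (-1)
  + lam * enorm th ^+ 2.

Definition is_aioli_forecasts (d : nat) (lam Rb B : R) (x : nat -> 'cV[R]_d) (y : nat -> R) (thhat : nat -> 'cV[R]_d) : Prop :=
  forall t, (1 <= t)%N -> forall th, (aioli_obj lam Rb B x y thhat) t (thhat t) <= (aioli_obj lam Rb B x y thhat) t th.

(* A_{t-1}, b_{t-1} *)
Definition Amat (d : nat) (lam Rb B : R) (x : nat -> 'cV[R]_d) (y : nat -> R) (thhat : nat -> 'cV[R]_d) (t : nat) : 'M[R]_d :=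
  lam%:M + 2^-1 *: \sum_(1 <= s < t) ((eta_s lam Rb B x y thhat) s *: ((g_s lam Rb B x y thhat) s *m ((g_s lam Rb B x y thhat) s)^T)).
Definition bvec (d : nat) (lam Rb B : R) (x : nat -> 'cV[R]_d) (y : nat -> R) (thhat : nat -> 'cV[R]_d) (t : nat) : 'cV[R]_d :=
  2^-1 *: \sum_(1 <= s < t) (((eta_s lam Rb B x y thhat) s * dotc ((g_s lam Rb B x y thhat) s) (thhat s) - 1) *: (g_s lam Rb B x y thhat) s).

Definition is_cholesky (d : nat) (A L : 'M[R]_d) : Prop :=
  is_trig_mx L /\ (forall i, 0 < L i i) /\ L *m L^T = A.

Definition Wmat (d : nat) (lam Rb B : R) (x : nat -> 'cV[R]_d) (y : nat -> R) (thhat : nat -> 'cV[R]_d) (t : nat) (L : 'M[R]_d) : 'M[R]_(d, 2) :=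
  invmx L *m row_mx ((bvec lam Rb B x y thhat) t) (x t).

End AIOLI.

Section Omega.
Variable R : realType.

Definition is_econ_eig p (M : 'M[R]_2) (U : 'M[R]_(2, p)) (sig : 'rV[R]_p) : Prop :=
  U^T *m U = 1%:M /\ (forall i, 0 < sig 0 i) /\ M = U *m diag_mx sig *m U^T.

Definition uvec p (U : 'M[R]_(2, p)) (sig : 'rV[R]_p) (k : 'I_2) : 'cV[R]_p :=
  diag_mx (map_mx Num.sqrt sig) *m U^T *m delta_mx k 0.

Definition Omega p (u v : 'cV[R]_p) (w : 'cV[R]_p) : R :=
  enorm w ^+ 2 - 2 * dotc u w
  + ln (1 + expR (- dotc v w)) + ln (1 + expR (dotc v w)).

Definition gd_iter p (f : 'cV[R]_p -> R) (gam : R) (i : nat) : 'cV[R]_p :=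
  iter i (fun w => w - gam *: grad f w) 0.

End Omega.

(* Main.v *)
Require Import Defs.
From HB Require Import structures.
From mathcomp Require Import all_boot all_order all_algebra.
From mathcomp Require Import all_classical all_reals.
From mathcomp Require Import all_analysis.
From mathcomp Require Import ring lra.
Import Order.TTheory GRing.Theory Num.Theory.
Local Open Scope ring_scope.

Section Basics.
Import numFieldNormedType.Exports.
Set Implicit Arguments. Unset Strict Implicit. Unset Printing Implicit Defensive.
Local Open Scope classical_set_scope.
Local Open Scope ring_scope.
Variable R : realType.

Lemma dotcC n (a b : 'cV[R]_n) : dotc a b = dotc b a.
Proof. by apply: eq_bigr => i _; rewrite mulrC. Qed.

Lemma dotcDl n (a b c : 'cV[R]_n) : dotc (a + b) c = dotc a c + dotc b c.
Proof. by rewrite /dotc -big_split; apply: eq_bigr => i _; rewrite !mxE mulrDl. Qed.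

Lemma dotcZl n k (a c : 'cV[R]_n) : dotc (k *: a) c = k * dotc a c.
Proof. by rewrite /dotc mulr_sumr; apply: eq_bigr => i _; rewrite !mxE mulrA. Qed.

Lemma dotcNl n (a c : 'cV[R]_n) : dotc (- a) c = - dotc a c.
Proof. by rewrite -scaleN1r dotcZl mulN1r. Qed.

Lemma dotcBl n (a b c : 'cV[R]_n) : dotc (a - b) c = dotc a c - dotc b c.
Proof. by rewrite dotcDl dotcNl. Qed.

Lemma dotcDr n (a b c : 'cV[R]_n) : dotc c (a + b) = dotc c a + dotc c b.
Proof. by rewrite !(dotcC c) dotcDl. Qed.
Lemma dotcZr n k (a c : 'cV[R]_n) : dotc c (k *: a) = k * dotc c a.
Proof. by rewrite !(dotcC c) dotcZl. Qed.
Lemma dotcBr n (a b c : 'cV[R]_n) : dotc c (a - b) = dotc c a - dotc c b.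
Proof. by rewrite !(dotcC c) dotcBl. Qed.
Lemma dotc0l n (c : 'cV[R]_n) : dotc 0 c = 0.
Proof. by rewrite -(scale0r 0) dotcZl mul0r. Qed.
Lemma dotc0r n (c : 'cV[R]_n) : dotc c 0 = 0.
Proof. by rewrite dotcC dotc0l. Qed.

Lemma dotc_ge0 n (a : 'cV[R]_n) : 0 <= dotc a a.
Proof. by apply: sumr_ge0 => i _; rewrite -expr2 sqr_ge0. Qed.

Lemma dotc_delta n (i : 'I_n) (w : 'cV[R]_n) : dotc (delta_mx i 0) w = w i 0.
Proof.
rewrite /dotc (bigD1 i) //= big1 ?addr0; first by rewrite mxE !eqxx mul1r.
by move=> j /negPf ji; rewrite mxE ji; exact: mul0r.
Qed.

Lemma dotc_mx n (a b : 'cV[R]_n) : dotc a b = (a^T *m b) 0 0.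
Proof. by rewrite mxE; apply: eq_bigr => i _; rewrite mxE. Qed.

Lemma enorm2 n (a : 'cV[R]_n) : enorm a ^+ 2 = dotc a a.
Proof. by rewrite /enorm sqr_sqrtr // dotc_ge0. Qed.

Lemma enorm_ge0 n (a : 'cV[R]_n) : 0 <= enorm a.
Proof. exact: sqrtr_ge0. Qed.

Lemma dotc_eq0 n (a : 'cV[R]_n) : dotc a a = 0 -> a = 0.
Proof.
move=> /eqP; rewrite psumr_eq0; last by move=> i _; rewrite -expr2 sqr_ge0.
move=> /allP H; apply/matrixP => i j; rewrite ord1 mxE.
by have := H i (mem_index_enum _); rewrite -expr2 sqrf_eq0 => /eqP.
Qed.

Lemma CS n (a b : 'cV[R]_n) : dotc a b ^+ 2 <= dotc a a * dotc b b.
Proof.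
have [a0|an0] := eqVneq (dotc a a) 0.
  by rewrite (dotc_eq0 a0) !dotc0l mul0r expr2 mul0r.
have := dotc_ge0 (dotc a a *: b - dotc a b *: a).
rewrite !(dotcBl, dotcBr, dotcZl, dotcZr) (dotcC b a) => H.
have ha : 0 < dotc a a by rewrite lt_def an0 dotc_ge0.
have : 0 <= dotc a a * (dotc a a * dotc b b - dotc a b ^+ 2).
  by rewrite (le_trans H) // le_eqVlt; apply/orP; left; apply/eqP; ring.
by rewrite pmulr_rge0 // subr_ge0.
Qed.

Lemma dotc_le_enorm n (a b : 'cV[R]_n) : dotc a b <= enorm a * enorm b.
Proof.
rewrite /enorm -sqrtrM ?dotc_ge0 //.
apply: (le_trans (ler_norm _)); rewrite -sqrtr_sqr.
by rewrite ler_sqrt ?CS // mulr_ge0 ?dotc_ge0.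
Qed.

Lemma enorm_triangle n (a b : 'cV[R]_n) : enorm (a + b) <= enorm a + enorm b.
Proof.
have h0 : 0 <= enorm a + enorm b by rewrite addr_ge0 ?enorm_ge0.
rewrite -[X in _ <= X]ger0_norm // -sqrtr_sqr /enorm ler_sqrt ?sqr_ge0 //.
rewrite sqrrD -!/(enorm _) !enorm2 dotcDl !dotcDr (dotcC b a).
have := dotc_le_enorm a b; lra.
Qed.

Lemma enormZ n k (a : 'cV[R]_n) : enorm (k *: a) = `|k| * enorm a.
Proof.
by rewrite /enorm dotcZl dotcZr mulrA -expr2 sqrtrM ?sqr_ge0 // sqrtr_sqr.
Qed.

Lemma derive_dir n (f : 'cV[R]_n -> R) a v :
  'D_v f a = 'D_1 (fun h : R => f (h *: v + a)) 0.
Proof.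
rewrite /derive; set g1 := (fun h => h^-1 *: _); set g2 := (fun h => h^-1 *: _).
suff -> : g1 = g2 by [].
by apply/funext => h; rewrite /g1 /g2 /= scale0r add0r addr0 [h *: 1]mulr1.
Qed.

Lemma is_derive_aff (c b h0 : R) : is_derive h0 1 (fun h => c + h * b) b.
Proof.
have -> : (fun h => c + h * b) = cst c + ( *%R^~ b) by apply/funext.
by apply: is_derive_eq; rewrite add0r scaler0 add0r [b%:A]mulr1.
Qed.

Lemma is_derive_lnexp (c b h0 : R) :
  is_derive h0 1 (fun h => ln (1 + expR (c + h * b)))
    (b * (expR (c + h0 * b) / (1 + expR (c + h0 * b)))).
Proof.
have he : is_derive h0 1 (expR \o (fun h => c + h * b)) (expR (c + h0 * b) * b).
  exact: (is_derive1_comp (is_derive_expR _) (is_derive_aff c b h0)).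
have hg : is_derive h0 1 (cst 1 + (expR \o (fun h => c + h * b))) (0 + expR (c + h0 * b) * b).
  apply: is_deriveD.
have pos : 0 < (cst 1 + (expR \o (fun h => c + h * b))) h0.
  by rewrite /= addr_gt0 ?expR_gt0.
have hl := is_derive1_comp (@is_derive1_ln R _ pos) hg.
have -> : (fun h => ln (1 + expR (c + h * b))) =
   (@ln R \o (cst 1 + (expR \o (fun h => c + h * b)))) by apply/funext.
by apply: is_derive_eq; rewrite /= add0r mulrC mulrA (mulrC b) mulrC.
Qed.

Definition sp (z : R) := expR z / (1 + expR z).

Lemma Omega_shift p (u v w e : 'cV[R]_p) h : Omega u v (h *: e + w) =
  h ^+ 2 * dotc e e + h * (2 * dotc e w - 2 * dotc u e) + (dotc w w - 2 * dotc u w)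
  + ln (1 + expR (- dotc v w + h * (- dotc v e)))
  + ln (1 + expR (dotc v w + h * dotc v e)).
Proof.
rewrite /Omega enorm2 !(dotcDl, dotcDr, dotcZl, dotcZr) (dotcC w e).
congr (_ + ln (1 + expR _) + ln (1 + expR _)); ring.
Qed.

Lemma is_derive_sqk (k h0 : R) : is_derive h0 1 (fun h => h ^+ 2 * k) (2 * h0 * k).
Proof.
have -> : (fun h : R => h ^+ 2 * k) = (fun h => h * h) * cst k.
  by apply/funext => h /=; rewrite expr2.
apply: is_derive_eq; rewrite scaler0 add0r [h0%:A]mulr1 /=.
by rewrite -[k *: _]/(k * (h0 + h0)); ring.
Qed.

Lemma is_derive_lin (k h0 : R) : is_derive h0 1 (fun h => h * k) k.
Proof. by have := is_derive_aff 0 k h0; under eq_fun do rewrite add0r. Qed.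

Lemma is_derive_Omega p (u v w e : 'cV[R]_p) (h0 : R) :
  is_derive h0 1 (fun h => Omega u v (h *: e + w))
   (2 * h0 * dotc e e + (2 * dotc e w - 2 * dotc u e)
    + (- dotc v e) * sp (- dotc v w + h0 * (- dotc v e))
    + dotc v e * sp (dotc v w + h0 * dotc v e)).
Proof.
have -> : (fun h => Omega u v (h *: e + w)) =
  (fun h => h ^+ 2 * dotc e e) + (fun h => h * (2 * dotc e w - 2 * dotc u e))
  + cst (dotc w w - 2 * dotc u w)
  + (fun h => ln (1 + expR (- dotc v w + h * (- dotc v e))))
  + (fun h => ln (1 + expR (dotc v w + h * dotc v e))).
  by apply/funext => h; rewrite Omega_shift.
have H := is_deriveD (is_deriveD (is_deriveD (is_deriveD
  (is_derive_sqk (dotc e e) h0) (is_derive_lin (2 * dotc e w - 2 * dotc u e) h0))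
  (is_derive_cst (dotc w w - 2 * dotc u w) h0 1))
  (is_derive_lnexp (- dotc v w) (- dotc v e) h0))
  (is_derive_lnexp (dotc v w) (dotc v e) h0).
by move: H; rewrite addr0.
Qed.

Lemma grad_Omega p (u v w : 'cV[R]_p) :
  grad (Omega u v) w = 2 *: w - 2 *: u + (sp (dotc v w) - sp (- dotc v w)) *: v.
Proof.
apply/matrixP => i j; rewrite ord1 !mxE derive_dir.
case: (is_derive_Omega u v w (delta_mx i 0) 0) => _ ->.
rewrite dotc_delta (dotcC u) (dotcC v) !dotc_delta !mul0r !mulr0 !addr0.
ring.
Qed.

Lemma grad_logloss n (a : 'cV[R]_n) (yy : R) (th : 'cV[R]_n) :
  grad (fun th => logloss (dotc th a) yy) th = (- yy * sp (- (yy * dotc th a))) *: a.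
Proof.
apply/matrixP => i j; rewrite ord1 !mxE derive_dir.
have -> : (fun h : R => logloss (dotc (h *: delta_mx i 0 + th) a) yy) =
   (fun h => ln (1 + expR (- (yy * dotc th a) + h * (- (yy * a i 0))))).
  apply/funext => h; rewrite /logloss dotcDl dotcZl dotc_delta.
  congr (ln (1 + expR _)); ring.
case: (is_derive_lnexp (- (yy * dotc th a)) (- (yy * a i 0)) 0) => _ ->.
by rewrite mul0r addr0 /sp; ring.
Qed.

Definition hp (z : R) := 1 - 2 / (1 + expR z).

Lemma sp_diff (z : R) : sp z - sp (- z) = hp z.
Proof.
rewrite /sp /hp expRN.
have e0 : expR z != 0 by rewrite gt_eqF ?expR_gt0.
have e1 : 1 + expR z != 0 by rewrite gt_eqF // addr_gt0 ?expR_gt0.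
have e2 : 1 + (expR z)^-1 != 0 by rewrite gt_eqF // addr_gt0 // invr_gt0 expR_gt0.
field.
by rewrite e1 e0.
Qed.

Lemma is_derive_hp (z : R) : is_derive z 1 hp (2 * expR z / (1 + expR z) ^+ 2).
Proof.
have hf : is_derive z 1 (cst 1 + expR) (0 + expR z) by apply: is_deriveD.
have nz : (cst 1 + expR) z != 0 by rewrite gt_eqF //= addr_gt0 ?expR_gt0.
have hg := is_deriveV nz hf.
have hh := is_deriveB (is_derive_cst (1:R) z 1) (is_deriveZ 2 hg).
have -> : hp = (cst 1 - 2 *: (fun y => ((cst 1 + expR) y)^-1)).
  by apply/funext => y; rewrite /hp.
apply: is_derive_eq; rewrite /= add0r.
rewrite -[X in X = _]/(- (2 * (- (1 + expR z) ^- 2 * (0 + expR z)))) add0r.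
have e1 : 1 + expR z != 0 by rewrite gt_eqF // addr_gt0 ?expR_gt0.
field.
by rewrite e1.
Qed.

Lemma hp_lip (a b : R) : exists k, 0 <= k /\ k <= 2^-1 /\ hp a - hp b = k * (a - b).
Proof.
have key : forall a b, a < b -> exists k, 0 <= k /\ k <= 2^-1 /\ hp b - hp a = k * (b - a).
  move=> {}a {}b ab.
  have hc : {within `[a, b], continuous hp}.
    apply/continuous_subspaceT => r.
    by apply/differentiable_continuous/derivable1_diffP; case: (is_derive_hp r).
  have [c _ ->] := MVT ab (fun x _ => is_derive_hp x) hc.
  exists (2 * expR c / (1 + expR c) ^+ 2); split; [|split] => //.
  set E := expR c.
  have E0 : 0 < E by apply: expR_gt0.
  rewrite ler_pdivrMr ?exprn_gt0 ?addr_gt0 //.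
  have : 0 <= (1 - E) ^+ 2 by apply: sqr_ge0.
  rewrite !expr2; nra.
case: (ltgtP a b) => [ab|ba|->].
- have [k [k0 [k1 e]]] := key a b ab; exists k; split => //; split => //.
  by rewrite -opprB e -mulrN opprB.
- exact: key.
- by exists 0; rewrite !subrr mulr0; split => //; split => //; rewrite invr_ge0.
Qed.

Lemma hp_sign (z : R) : 0 <= hp z * z.
Proof.
rewrite /hp.
have e1 : 0 < 1 + expR z by rewrite addr_gt0 ?expR_gt0.
case: (lerP 0 z) => z0.
  apply: mulr_ge0 => //; rewrite subr_ge0 ler_pdivrMr // mul1r.
  by rewrite lerD2l -expR0 ler_expR.
apply: mulr_le0; last exact: ltW.
rewrite subr_le0 ler_pdivlMr // mul1r lerD2l -expR0 ler_expR; exact: ltW.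
Qed.

Lemma grad_Omega_hp p (u v w : 'cV[R]_p) :
  grad (Omega u v) w = 2 *: w - 2 *: u + hp (dotc v w) *: v.
Proof. by rewrite grad_Omega sp_diff. Qed.

Lemma Omega_stat p (u v ws : 'cV[R]_p) :
  (forall w, Omega u v ws <= Omega u v w) -> grad (Omega u v) ws = 0.
Proof.
move=> hmin; apply/matrixP => i j; rewrite !mxE derive_dir.
have hd : forall t : R, t \in `]-1, 1[ ->
    derivable (fun h : R => Omega u v (h *: delta_mx i 0 + ws)) t 1.
  by move=> t _; case: (is_derive_Omega u v ws (delta_mx i 0) t).
have h0 : (0 : R) \in `]-1, 1[ by rewrite in_itv /=; apply/andP; split; lra.
have hle : (-1 : R) <= 1 by lra.
have hm : forall t : R, t \in `]-1, 1[ ->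
    Omega u v (0 *: delta_mx i 0 + ws) <= Omega u v (t *: delta_mx i 0 + ws).
  by move=> t _; rewrite scale0r add0r; apply: hmin.
by case: (derive1_at_min hle hd h0 hm) => _ ->.
Qed.

Lemma step_contract p (u v ws w : 'cV[R]_p) (g : R) :
  grad (Omega u v) ws = 0 -> 0 < g -> 0 <= 1 - 2 * g ->
  g * dotc v v <= 4 * (1 - 2 * g) ->
  enorm (w - g *: grad (Omega u v) w - ws) <= (1 - 2 * g) * enorm (w - ws).
Proof.
move=> hws g0 a0 hv.
rewrite grad_Omega_hp in hws; rewrite grad_Omega_hp.
have [k [k0 [k1 hk]]] := hp_lip (dotc v w) (dotc v ws).
set a := 1 - 2 * g.
set c := dotc v w - dotc v ws.
have E : w - g *: (2 *: w - 2 *: u + hp (dotc v w) *: v) - ws =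
         a *: (w - ws) - (g * k * c) *: v.
  apply/matrixP => i j.
  have := congr1 (fun M : 'cV[R]_p => M i j) hws; rewrite !mxE => H.
  have hk' : hp (dotc v w) = hp (dotc v ws) + k * c by rewrite -hk /c; ring.
  rewrite hk' /a.
  have -> : u i j = ws i j + hp (dotc v ws) * v i j / 2.
    apply/eqP; rewrite -subr_eq0; apply/eqP.
    by rewrite -[RHS](mulr0 (- 2^-1)) -H; field.
  by field.
rewrite E; set d := w - ws.
have hc : dotc d v = c by rewrite /d dotcBl !(dotcC _ v).
have hc' : dotc v d = c by rewrite dotcC.
clearbody d.
have hvv := dotc_ge0 v.
have hgk : g * k * dotc v v <= 2 * a.
  have : g * k * dotc v v <= g * 2^-1 * dotc v v.
    by rewrite ler_wpM2r // ler_wpM2l // ltW.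
  move=> h; apply: (le_trans h); rewrite /a; lra.
have hs : 0 <= (g * k * c) * c * (2 * a - g * k * dotc v v).
  have hc2 : 0 <= c * c by rewrite -expr2 sqr_ge0.
  have hgk0 : 0 <= g * k by rewrite mulr_ge0 // ltW.
  rewrite mulr_ge0 ?subr_ge0 // -mulrA; exact: mulr_ge0.
have key : dotc (a *: d - (g * k * c) *: v) (a *: d - (g * k * c) *: v) <= a ^+ 2 * dotc d d.
  rewrite !(dotcBl, dotcBr, dotcZl, dotcZr) hc' hc -subr_ge0.
  have -> : a ^+ 2 * dotc d d -
  (a * (a * dotc d d) - g * k * c * (a * c) -
   g * k * c * (a * c - g * k * c * dotc v v)) =
   (g * k * c) * c * (2 * a - g * k * dotc v v) by ring.
  exact: hs.
rewrite /enorm; apply: (le_trans (ler_wsqrtr key)).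
by rewrite sqrtrM ?sqr_ge0 // sqrtr_sqr ger0_norm.
Qed.

Lemma enormN p (a : 'cV[R]_p) : enorm (- a) = enorm a.
Proof. by rewrite -scaleN1r enormZ normrN normr1 mul1r. Qed.

Lemma gd_bound p (u v ws : 'cV[R]_p) (g : R) (T : nat) :
  grad (Omega u v) ws = 0 -> 0 < g -> 0 <= 1 - 2 * g ->
  g * dotc v v <= 4 * (1 - 2 * g) ->
  enorm (gd_iter (Omega u v) g T - ws) <= (1 - 2 * g) ^+ T * enorm ws.
Proof.
move=> hws g0 a0 hv; elim: T => [|T IH].
  by rewrite /gd_iter /= add0r enormN expr0 mul1r.
rewrite /gd_iter iterS -/(gd_iter (Omega u v) g T).
apply: (le_trans (step_contract _ hws g0 a0 hv)).
by rewrite exprS -mulrA ler_wpM2l.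
Qed.

Lemma ws_bound p (u v ws : 'cV[R]_p) :
  grad (Omega u v) ws = 0 -> enorm ws <= enorm u.
Proof.
rewrite grad_Omega_hp => hws.
have := congr1 (fun M => dotc ws M) hws.
rewrite dotc0r !(dotcDr, dotcBr, dotcZr) (dotcC ws v) => H.
have hs := hp_sign (dotc v ws).
have h1 : dotc ws ws <= dotc ws u.
  have : 2 * dotc ws ws - 2 * dotc ws u <= 0.
    rewrite -H (dotcC ws (- _)) dotcNl dotcZl (dotcC u); lra.
  lra.
have h2 := dotc_le_enorm ws u.
rewrite -enorm2 in h1.
have hw := enorm_ge0 ws.
have [->|wpos] := eqVneq (enorm ws) 0; first exact: enorm_ge0.
have wp : 0 < enorm ws by rewrite lt_def wpos hw.
have : enorm ws * enorm ws <= enorm u * enorm ws by rewrite -expr2 (mulrC (enorm u)); exact: le_trans h1 h2.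
by rewrite ler_pM2r.
Qed.

Lemma le_expR (x : R) : x <= expR x.
Proof. by apply: le_trans (expR_ge1Dx x); rewrite lerDr. Qed.

Lemma key_exp (w : R) : expR (- w) * `|w| <= (1 + expR (- w)) ^+ 2.
Proof.
set E := expR (- w).
have E0 : 0 < E by apply: expR_gt0.
case: (lerP 0 w) => w0.
  rewrite ger0_norm //.
  have : E * w <= E * expR w by rewrite ler_pM2l //; apply: le_expR.
  have h1 : E * expR w = 1 by rewrite /E -expRD addNr expR0.
  rewrite h1 => h; apply: (le_trans h).
  rewrite expr2; nra.
rewrite ltr0_norm //.
have : - w <= E by apply: le_expR.
move=> h; rewrite expr2; nra.
Qed.

Lemma coef_w (s w c0 : R) : (s = 1 \/ s = -1) -> 1 <= c0 ->
  `|(expR w / c0 * ((- s * sp (- w)) * (s * w)) - 1) * (- s * sp (- w))| <= 2.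
Proof.
move=> hs c1.
have c0p : 0 < c0 by apply: lt_le_trans c1.
set E := expR (- w).
have E0 : 0 < E by apply: expR_gt0.
have hw : expR w = E^-1 by rewrite /E expRN invrK.
have e1 : 0 < 1 + E by rewrite addr_gt0.
have -> : (expR w / c0 * ((- s * sp (- w)) * (s * w)) - 1) * (- s * sp (- w)) =
   s * (E * w / (c0 * (1 + E) ^+ 2) + E / (1 + E)).
  rewrite hw /sp -/E.
  have E0' : E != 0 by rewrite gt_eqF.
  have e1' : 1 + E != 0 by rewrite gt_eqF.
  have c0' : c0 != 0 by rewrite gt_eqF.
  by case: hs => ->; field; rewrite ?E0' ?e1' ?c0'.
have hs1 : `|s| = 1 by case: hs => ->; rewrite ?normrN normr1.
rewrite normrM hs1 mul1r.
apply: (le_trans (ler_normD _ _)).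
have h1 : `|E * w / (c0 * (1 + E) ^+ 2)| <= 1.
  rewrite normrM normrM normfV normrM (gtr0_norm E0) (gtr0_norm c0p).
  rewrite (ger0_norm (sqr_ge0 _)).
  rewrite ler_pdivrMr ?mulr_gt0 ?exprn_gt0 // mul1r.
  apply: (le_trans (key_exp w)); rewrite -/E.
  by rewrite ler_peMl ?sqr_ge0.
have h2 : `|E / (1 + E)| <= 1.
  rewrite ger0_norm; last by rewrite divr_ge0 // ltW.
  rewrite ler_pdivrMr // mul1r; lra.
have -> : (2 : R) = 1 + 1 by [].
exact: lerD.
Qed.

Lemma dotc_mulmx n m (M : 'M[R]_(n, m)) (a : 'cV[R]_m) (b : 'cV[R]_n) :
  dotc (M *m a) b = dotc a (M^T *m b).
Proof. by rewrite !dotc_mx trmx_mul mulmxA. Qed.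

Lemma chol_bound n (L A : 'M[R]_n) (lam : R) (z : 'cV[R]_n) :
  0 < lam -> L \in unitmx -> L *m L^T = A ->
  (forall p, lam * dotc p p <= dotc p (A *m p)) ->
  dotc (invmx L *m z) (invmx L *m z) <= dotc z z / lam.
Proof.
move=> lam0 Lu hA hq.
set w := invmx L *m z; set q := invmx L^T *m w.
have hLq : L^T *m q = w by rewrite /q mulKVmx ?unitmx_tr.
have hz : A *m q = z by rewrite -hA -mulmxA hLq /w mulKVmx.
have e1 : dotc w w = dotc q z.
  by rewrite -{1}hLq dotc_mulmx trmxK -/w /w mulKVmx.
have e2 := hq q; rewrite hz in e2.
have e3 := dotc_le_enorm q z.
rewrite e1 ler_pdivlMr // -enorm2 -enorm2 in e2 *.
have nq := enorm_ge0 q; have nz := enorm_ge0 z.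
set a := enorm q in e2 e3 nq *; set b := enorm z in e3 nz *.
have h4 := sqr_ge0 (b - lam * a).
have h5 : lam * (lam * a ^+ 2) <= lam * (a * b).
  by rewrite ler_pM2l //; apply: le_trans e2 e3.
rewrite !expr2 in h4 h5 e2 *; nra.
Qed.

Lemma L_unit n (L : 'M[R]_n) : is_trig_mx L -> (forall i, 0 < L i i) -> L \in unitmx.
Proof.
move=> tL dL; rewrite unitmxE det_trig // unitfE; apply: lt0r_neq0.
by apply: prodr_gt0 => i _; apply: dL.
Qed.

Lemma quad_A d (lam Rb B : R) (x : nat -> 'cV[R]_d) (y : nat -> R)
  (thhat : nat -> 'cV[R]_d) (t : nat) (p : 'cV[R]_d) :
  0 < Rb -> 0 < B ->
  lam * dotc p p <= dotc p (Amat lam Rb B x y thhat t *m p).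
Proof.
move=> R0 B0.
rewrite /Amat mulmxDl mul_scalar_mx -scalemxAl dotcDr !dotcZr lerDl.
apply: mulr_ge0; first by rewrite invr_ge0.
rewrite mulmx_suml.
apply: (big_ind (fun X => 0 <= dotc p X)); first by rewrite dotc0r.
  by move=> X Y hX hY; rewrite dotcDr addr_ge0.
move=> s _.
rewrite -scalemxAl dotcZr; apply: mulr_ge0.
  by rewrite /eta_s divr_ge0 ?expR_ge0 // addr_ge0 // mulr_ge0 // ltW.
by rewrite -mulmxA dotcC dotc_mulmx dotc_ge0.
Qed.

Lemma uvec_dotc n (W : 'M[R]_(n, 2)) q (U : 'M[R]_(2, q)) sig (k : 'I_2) :
  is_econ_eig (W^T *m W) U sig ->
  dotc (uvec U sig k) (uvec U sig k) = dotc (W *m delta_mx k 0) (W *m delta_mx k 0).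
Proof.
case=> _ [sp0 hM].
set D := diag_mx (map_mx Num.sqrt sig).
have hD : D *m D = diag_mx sig.
  rewrite /D mulmx_diag; congr diag_mx; apply/matrixP => i j.
  by rewrite !mxE ord1 -expr2 sqr_sqrtr // ltW.
rewrite /uvec -/D !dotc_mx !trmx_mul !trmxK /D tr_diag_mx -/D.
rewrite -!mulmxA [D *m (D *m _)]mulmxA hD.
by rewrite [W^T *m (W *m _)]mulmxA hM -!mulmxA.
Qed.

Lemma row_mx_delta0 n (b c : 'cV[R]_n) : row_mx b c *m delta_mx (0 : 'I_2) 0 = b.
Proof.
rewrite -colE; apply/matrixP => i j; rewrite mxE ord1.
have -> : (0 : 'I_2) = lshift 1 (0 : 'I_1) by apply: val_inj.
by rewrite row_mxEl.
Qed.

Lemma row_mx_delta1 n (b c : 'cV[R]_n) : row_mx b c *m delta_mx (1 : 'I_2) 0 = c.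
Proof.
rewrite -colE; apply/matrixP => i j; rewrite mxE ord1.
have -> : (1 : 'I_2) = rshift 1 (0 : 'I_1) by apply: val_inj.
by rewrite row_mxEr.
Qed.

Lemma enorm0 n : enorm (0 : 'cV[R]_n) = 0.
Proof. by rewrite /enorm dotc0l sqrtr0. Qed.

Lemma enorm_sum n (m k : nat) (F : nat -> 'cV[R]_n) :
  enorm (\sum_(m <= s < k) F s) <= \sum_(m <= s < k) enorm (F s).
Proof.
apply: (big_ind2 (fun a b => enorm a <= b)); first by rewrite enorm0.
  by move=> a1 b1 a2 b2 h1 h2; apply: (le_trans (enorm_triangle _ _)); apply: lerD.
by [].
Qed.

Lemma term_bound d (lam Rb B : R) (x : nat -> 'cV[R]_d) (y : nat -> R)
  (thhat : nat -> 'cV[R]_d) (s : nat) :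
  0 < Rb -> 0 < B -> enorm (x s) <= Rb -> (y s = 1 \/ y s = -1) ->
  enorm ((eta_s lam Rb B x y thhat s * dotc (g_s lam Rb B x y thhat s) (thhat s) - 1)
         *: g_s lam Rb B x y thhat s) <= 2 * Rb.
Proof.
move=> R0 B0 hx hy.
have hg : g_s lam Rb B x y thhat s =
   (- y s * sp (- (y s * dotc (thhat s) (x s)))) *: x s :=
  grad_logloss (x s) (y s) (thhat s).
rewrite hg dotcZl (dotcC (x s)) scalerA enormZ /eta_s.
set z := dotc (thhat s) (x s).
have hz : y s * (y s * z) = z by case: hy => ->; ring.
have c1 : 1 <= 1 + B * Rb by rewrite lerDl mulr_ge0 // ltW.
have := coef_w (y s * z) hy c1; rewrite hz => hc.
apply: (le_trans (ler_wpM2l (normr_ge0 _) hx)).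
by rewrite ler_wpM2r // ltW.
Qed.

Lemma b_bound d (lam Rb B : R) (x : nat -> 'cV[R]_d) (y : nat -> R)
  (thhat : nat -> 'cV[R]_d) (t : nat) :
  0 < Rb -> 0 < B ->
  (forall s, (1 <= s)%N -> enorm (x s) <= Rb) ->
  (forall s, (1 <= s)%N -> y s = 1 \/ y s = -1) ->
  enorm (bvec lam Rb B x y thhat t) <= Rb * t%:R.
Proof.
move=> R0 B0 hx hy.
rewrite /bvec enormZ ger0_norm ?invr_ge0 //.
apply: (le_trans (ler_wpM2l _ (enorm_sum _ _ _))); first by rewrite invr_ge0.
apply: (le_trans (ler_wpM2l _ (ler_sum_nat (G := fun _ => 2 * Rb) _))).
- by rewrite invr_ge0.
- move=> s /andP [s1 _]; apply: term_bound => //; [exact: hx | exact: hy].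
rewrite sumr_const_nat -(mulr_natr (2 * Rb)) !mulrA mulVf ?mul1r; last by rewrite pnatr_eq0.
rewrite ler_pM2l // ler_nat leq_subr //.
Qed.

End Basics.
Unset Implicit Arguments.

Theorem lemma2 (R : realType) (d : nat) (lam Rb B : R)
  (x : nat -> 'cV[R]_d) (y : nat -> R) (thhat : nat -> 'cV[R]_d) (t : nat)
  (L : 'M[R]_d) (U : 'M[R]_(2, \rank (Wmat lam Rb B x y thhat t L)))
  (sig : 'rV[R]_(\rank (Wmat lam Rb B x y thhat t L)))
  (omstar : 'cV[R]_(\rank (Wmat lam Rb B x y thhat t L)))
  (eps gam : R) (T : nat) :
  (0 < d)%N -> 0 < lam -> 0 < Rb -> 0 < B ->
  (forall s, (1 <= s)%N -> enorm (x s) <= Rb) ->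
  (forall s, (1 <= s)%N -> y s = 1 \/ y s = -1) ->
  (1 <= t)%N ->
  is_aioli_forecasts lam Rb B x y thhat ->
  is_cholesky (Amat lam Rb B x y thhat t) L ->
  is_econ_eig ((Wmat lam Rb B x y thhat t L)^T *m Wmat lam Rb B x y thhat t L) U sig ->
  (forall w, Omega (uvec U sig 0) (uvec U sig 1) omstar
             <= Omega (uvec U sig 0) (uvec U sig 1) w) ->
  0 < eps -> 0 < gam ->
  gam = lam / (4 * lam + Rb ^+ 2) ->
  (4 + Rb ^+ 2 / lam) * ln (Rb * t%:R / (eps * Num.sqrt lam)) <= T%:R ->
  enorm (gd_iter (Omega (uvec U sig 0) (uvec U sig 1)) gam T - omstar) <= eps.
Proof.
move=> d0 lam0 R0 B0 hx hy t1 _ [tL [dL hLL]] heig hmin eps0 gam0 hgam hT.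
set W := Wmat lam Rb B x y thhat t L in heig *.
set u := uvec U sig 0; set v := uvec U sig 1.
have Lu := L_unit tL dL.
have hq := fun p => @quad_A R d lam Rb B x y thhat t p R0 B0.
have hv : dotc v v <= Rb ^+ 2 / lam.
  rewrite /v (uvec_dotc _ heig) /W /Wmat -mulmxA row_mx_delta1.
  apply: (le_trans (chol_bound (x t) lam0 Lu hLL hq)).
  rewrite ler_pM2r ?invr_gt0 // -enorm2 lerXn2r ?nnegrE ?enorm_ge0 ?(ltW R0) //.
  exact: hx.
have hu : enorm u <= Rb * t%:R / Num.sqrt lam.
  have : dotc u u <= (Rb * t%:R) ^+ 2 / lam.
    rewrite /u (uvec_dotc _ heig) /W /Wmat -mulmxA row_mx_delta0.
    apply: (le_trans (chol_bound _ lam0 Lu hLL hq)).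
    rewrite ler_pM2r ?invr_gt0 // -enorm2 lerXn2r ?nnegrE ?enorm_ge0 ?mulr_ge0 ?ler0n ?(ltW R0) //.
    exact: b_bound.
  move=> h; rewrite /enorm; apply: (le_trans (ler_wsqrtr h)).
  rewrite sqrtrM ?sqr_ge0 // sqrtr_sqr ger0_norm ?mulr_ge0 ?ler0n ?(ltW R0) //.
  by rewrite sqrtrV ?(ltW lam0).
have hstat := Omega_stat hmin.
have hden : 0 < 4 * lam + Rb ^+ 2 by rewrite addr_gt0 ?mulr_gt0 ?exprn_gt0.
have ha0 : 0 <= 1 - 2 * gam.
  rewrite hgam subr_ge0 mulrA ler_pdivrMr // mul1r.
  have := sqr_ge0 Rb; lra.
have hgv : gam * dotc v v <= 4 * (1 - 2 * gam).
  apply: (le_trans (ler_wpM2l (ltW gam0) hv)).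
  have e1 : gam * (Rb ^+ 2 / lam) = Rb ^+ 2 * (4 * lam + Rb ^+ 2)^-1.
    by rewrite hgam; field; rewrite ?gt_eqF.
  have e2 : 4 * (1 - 2 * gam) = (8 * lam + 4 * Rb ^+ 2) * (4 * lam + Rb ^+ 2)^-1.
    by rewrite hgam; field; rewrite ?gt_eqF.
  rewrite e1 e2 ler_pM2r ?invr_gt0 //.
  have := sqr_ge0 Rb; lra.
have := gd_bound T hstat gam0 ha0 hgv.
set a := 1 - 2 * gam => hb.
apply: (le_trans hb).
have hws := ws_bound hstat.
have haT0 : 0 <= a ^+ T by rewrite exprn_ge0.
apply: (le_trans (ler_wpM2l haT0 (le_trans hws hu))).
set A := Rb * t%:R / (eps * Num.sqrt lam).
have sl : 0 < Num.sqrt lam by rewrite sqrtr_gt0.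
have tp : 0 < t%:R :> R by rewrite ltr0n.
have Ap : 0 < A by rewrite /A divr_gt0 ?mulr_gt0.
have hA : Rb * t%:R / Num.sqrt lam = eps * A.
  by rewrite /A; field; rewrite ?gt_eqF.
rewrite hA mulrCA ger_pMr //.
have [A1|A1] := lerP A 1.
  apply: (le_trans (ler_wpM2l haT0 A1)); rewrite mulr1.
  by apply: exprn_ile1 => //; rewrite /a; lra.
have hae : a <= expR (- gam).
  by apply: le_trans (expR_ge1Dx _); rewrite /a; lra.
have : a ^+ T <= expR (- gam) ^+ T by rewrite lerXn2r ?nnegrE ?expR_ge0.
rewrite -expRM_natl => haT.
have hinv : 1 / gam = 4 + Rb ^+ 2 / lam.
  by rewrite hgam; field; rewrite ?gt_eqF.
have hlnA : ln A <= gam * T%:R.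
  have h1 : (1 / gam) * ln A <= T%:R by rewrite hinv; exact: hT.
  have h2 := ler_wpM2l (ltW gam0) h1.
  by rewrite mulrA div1r mulfV ?gt_eqF // mul1r in h2.
have : expR (T%:R * - gam) <= A^-1.
  rewrite -(lnK Ap) -expRN ler_expR; lra.
move=> h; apply: (le_trans (ler_wpM2r (ltW Ap) (le_trans haT h))).
by rewrite mulVf ?gt_eqF.
Qed.
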